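(* Let $q$ be a prime power and $m>1$ an integer. Let $L_1(x),L_2(x)\in\mathbf{F}_q[x]$ be linearized polynomials, let $h(x)\in\mathbf{F}_q[x]$ and $\gamma\in\mathbf{F}_{q^m}$. Then $$F(x):=L_1(x)+\bigl(L_2(x)+\gamma\bigr)h\bigl(\mathrm{Tr}_{\mathbf{F}_{q^m}/\mathbf{F}_q}(x)\bigr)$$ is a permutation polynomial of $\mathbf{F}_{q^m}$ if and only if both of the following hold: (1) $L_1(x)+\bigl(L_2(x)+\mathrm{Tr}_{\mathbf{F}_{q^m}/\mathbf{F}_q}(\gamma)\bigr)h(x)\in\mathbf{F}_q[x]$ is a permutation polynomial of $\mathbf{F}_q$; (2) for every $y\in\mathbf{F}_q$, an element $x\in\mathbf{F}_{q^m}$ satisfies both $L_1(x)+L_2(x)h(y)=0$ and $\mathrm{Tr}_{\mathbf{F}_{q^m}/\mathbf{F}_q}(x)=0$ if and only if $x=0$.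
   Context: $\mathrm{Tr}_{\mathbf{F}_{q^m}/\mathbf{F}_q}(x)=x+x^q+\cdots+x^{q^{m-1}}$. A linearized polynomial with coefficients in $\mathbf{F}_q$ is a polynomial of the form $\sum_{i=0}^{m-1}a_i x^{q^i}$ with $a_i\in\mathbf{F}_q$. A permutation polynomial of a finite field $K$ is a polynomial inducing a bijection $K\to K$. *)

(* Defs.v *)
From HB Require Import structures.
From mathcomp Require Import all_boot all_order all_algebra all_field.
Set Implicit Arguments. Unset Strict Implicit. Unset Printing Implicit Defensive.
Import GRing.Theory.
Local Open Scope ring_scope.

(* K plays the role of F_{q^m}; the subfield F_q is the set of fixed
   points of x |-> x^q. *)
Definition subFq (K : finFieldType) (q : nat) : {set K} :=
  [set x : K | x ^+ q == x].

Definition trpoly (K : finFieldType) (q m : nat) : {poly K} :=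
  \sum_(i < m) 'X^(q ^ i).

Definition tr (K : finFieldType) (q m : nat) (x : K) : K :=
  \sum_(i < m) x ^+ (q ^ i).

Definition linpoly (K : finFieldType) (q m : nat) (a : 'I_m -> K) : {poly K} :=
  \sum_(i < m) a i *: 'X^(q ^ i).

Definition is_perm_poly (K : finFieldType) (p : {poly K}) : Prop :=
  bijective (fun x => p.[x]).

Definition is_perm_poly_on (K : finFieldType) (S : {set K}) (p : {poly K}) : Prop :=
  {in S, forall x, p.[x] \in S} /\ {in S &, injective (fun x => p.[x])}.

(* Main.v *)
Require Import Defs.
From HB Require Import structures.
From mathcomp Require Import all_boot all_order all_algebra all_field.
From mathcomp Require Import ring.
Import GRing.Theory.
Local Open Scope ring_scope.

Section Aux.
Variable K : finFieldType.
Variables q m : nat.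
Hypothesis hF : forall (n : nat) (x y : K), (x + y) ^+ (q ^ n) = x ^+ (q ^ n) + y ^+ (q ^ n).
Hypothesis hq2 : (1 < q)%N.
Hypothesis hm : (0 < m)%N.
Hypothesis hK : #|K| = (q ^ m)%N.

Local Notation T := (@tr K q m).

Lemma frob0 n : (0 : K) ^+ (q ^ n) = 0.
Proof. by rewrite expr0n expn_eq0 (negbTE (lt0n_neq0 (ltnW hq2))) andFb. Qed.

Lemma frobN n (x : K) : (- x) ^+ (q ^ n) = - x ^+ (q ^ n).
Proof. by apply/eqP; rewrite -addr_eq0 -hF addrC subrr frob0. Qed.

Lemma frobS n (I : Type) (r : seq I) (P : pred I) (G : I -> K) :
  (\sum_(i <- r | P i) G i) ^+ (q ^ n) = \sum_(i <- r | P i) G i ^+ (q ^ n).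
Proof. by apply: (big_morph (fun x => x ^+ (q ^ n))); [move=> x y; exact: hF|exact: frob0]. Qed.

Lemma inS (x : K) : (x \in subFq K q) = (x ^+ q == x).
Proof. by rewrite inE. Qed.

Lemma Sexp x n : x \in subFq K q -> x ^+ (q ^ n) = x.
Proof.
rewrite inS => /eqP hx; elim: n => [|n IH]; first by rewrite expn0 expr1.
by rewrite expnSr exprM IH hx.
Qed.

Lemma S_add x y : x \in subFq K q -> y \in subFq K q -> x + y \in subFq K q.
Proof. by rewrite !inS => /eqP hx /eqP hy; rewrite -(expn1 q) hF expn1 hx hy. Qed.

Lemma S_mul x y : x \in subFq K q -> y \in subFq K q -> x * y \in subFq K q.
Proof. by rewrite !inS => /eqP hx /eqP hy; rewrite exprMn hx hy. Qed.

Lemma S_0 : (0 : K) \in subFq K q.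
Proof. by rewrite inS -(expn1 q) frob0. Qed.

Lemma S_opp x : x \in subFq K q -> - x \in subFq K q.
Proof. by rewrite !inS => /eqP hx; rewrite -(expn1 q) frobN expn1 hx. Qed.

Lemma S_exp x i : x \in subFq K q -> x ^+ i \in subFq K q.
Proof. by rewrite !inS => /eqP hx; rewrite exprAC hx. Qed.

Lemma S_horner (h : {poly K}) y : (forall i, h`_i \in subFq K q) ->
  y \in subFq K q -> h.[y] \in subFq K q.
Proof.
move=> hh hy; rewrite horner_coef.
apply: (big_ind (fun z => z \in subFq K q)) => //; first exact: S_0.
  exact: S_add.
by move=> i _; apply: S_mul => //; exact: S_exp.
Qed.

Lemma trE (x : K) : T x = \sum_(i < m) x ^+ (q ^ i).
Proof. by []. Qed.

Lemma trD x y : T (x + y) = T x + T y.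
Proof. by rewrite !trE -big_split; apply: eq_bigr => i _; rewrite hF. Qed.

Lemma tr0 : T 0 = 0.
Proof. by rewrite trE big1 // => i _; rewrite frob0. Qed.

Lemma trN x : T (- x) = - T x.
Proof. by apply/eqP; rewrite -addr_eq0 -trD addNr tr0. Qed.

Lemma trB x y : T (x - y) = T x - T y.
Proof. by rewrite trD trN. Qed.

Lemma trZ c x : c \in subFq K q -> T (c * x) = c * T x.
Proof.
move=> hc; rewrite !trE mulr_sumr; apply: eq_bigr => i _.
by rewrite exprMn Sexp.
Qed.

Lemma trS (I : Type) (r : seq I) (P : pred I) (G : I -> K) :
  T (\sum_(i <- r | P i) G i) = \sum_(i <- r | P i) T (G i).
Proof. by apply: (big_morph T); [exact: trD | exact: tr0]. Qed.

Lemma tr_in x : T x \in subFq K q.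
Proof.
rewrite inS -(expn1 q) trE frobS expn1.
have hx : x ^+ (q ^ m) = x by rewrite -hK expf_card.
case: m hm hx => // m' _ hx.
rewrite big_ord_recr big_ord_recl /= expn0 expr1 -exprM -expnSr hx addrC.
apply/eqP; congr (_ + _).
by apply: eq_bigr => i _; rewrite -exprM -expnSr.
Qed.

Lemma tr_frob x n : T (x ^+ (q ^ n)) = T x.
Proof.
rewrite [LHS]trE (eq_bigr (fun i : 'I_m => x ^+ (q ^ i) ^+ (q ^ n))).
  by rewrite -frobS -trE Sexp // tr_in.
by move=> i _; rewrite exprAC.
Qed.

Lemma lin_eval (a : 'I_m -> K) x :
  (linpoly q a).[x] = \sum_(i < m) a i * x ^+ (q ^ i).
Proof. by rewrite /linpoly horner_sum; apply: eq_bigr => i _; rewrite hornerZ hornerXn. Qed.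

Lemma linD (a : 'I_m -> K) x y : (linpoly q a).[x + y] = (linpoly q a).[x] + (linpoly q a).[y].
Proof. by rewrite !lin_eval -big_split; apply: eq_bigr => i _; rewrite hF mulrDr. Qed.

Lemma lin0 (a : 'I_m -> K) : (linpoly q a).[0] = 0.
Proof. by rewrite lin_eval big1 // => i _; rewrite frob0 mulr0. Qed.

Lemma linB (a : 'I_m -> K) x y : (linpoly q a).[x - y] = (linpoly q a).[x] - (linpoly q a).[y].
Proof.
rewrite linD; congr (_ + _); apply/eqP; rewrite -addr_eq0 -linD addNr; exact/eqP/lin0.
Qed.

Lemma lin_tr (a : 'I_m -> K) x : (forall i, a i \in subFq K q) ->
  T ((linpoly q a).[x]) = (linpoly q a).[T x].
Proof.
move=> ha; rewrite !lin_eval trS; apply: eq_bigr => i _.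
by rewrite trZ // tr_frob Sexp // tr_in.
Qed.

Lemma trpoly_eval x : (trpoly K q m).[x] = T x.
Proof. by rewrite /trpoly horner_sum; apply: eq_bigr => i _; rewrite hornerXn. Qed.

Lemma size_trpoly : size (trpoly K q m) = (q ^ m.-1).+1.
Proof.
rewrite /trpoly; case: m hm => // m' _.
rewrite big_ord_recr /= addrC size_polyDl size_polyXn //.
apply: leq_ltn_trans (size_sum _ _ _) _; rewrite ltnS.
apply/bigmax_leqP => i _; rewrite size_polyXn ltn_exp2l //.
Qed.

Lemma card_ker : (#|[set x : K | T x == 0%R]| <= q ^ m.-1)%N.
Proof.
have P0 : trpoly K q m != 0 by rewrite -size_poly_eq0 size_trpoly.
have := max_poly_roots P0 _ (enum_uniq (mem [set x : K | T x == 0%R])).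
rewrite -cardE size_trpoly ltnS; apply.
by apply/allP => x; rewrite mem_enum inE rootE trpoly_eval.
Qed.

Lemma card_S : (#|subFq K q| <= q)%N.
Proof.
have sQ : size ('X^q - 'X : {poly K}) = q.+1.
  by rewrite size_polyDl size_polyXn // size_polyN size_polyX ltnS.
have Q0 : ('X^q - 'X : {poly K}) != 0 by rewrite -size_poly_eq0 sQ.
have := max_poly_roots Q0 _ (enum_uniq (mem (subFq K q))).
rewrite -cardE sQ ltnS; apply.
by apply/allP => x; rewrite mem_enum inS rootE !hornerE subr_eq0.
Qed.

Lemma tr_surj y : y \in subFq K q -> exists x, T x = y.
Proof.
move=> hy.
pose I := T @: [set: K].
pose Ker := [set x : K | T x == 0].
pose r s := odflt 0 [pick z | T z == s].
have hr x : T (r (T x)) = T x.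
  by rewrite /r; case: pickP => [z /eqP //|/(_ x)]; rewrite eqxx.
pose f x := (T x, x - r (T x)).
have finj : injective f.
  move=> x1 x2 [e1 e2]; rewrite e1 in e2; exact: addIr e2.
have sub : f @: [set: K] \subset setX I Ker.
  apply/subsetP => _ /imsetP[x _ ->]; rewrite !inE /=.
  by rewrite (imset_f T (in_setT x)) trB hr subrr eqxx.
have c1 := subset_leq_card sub.
rewrite card_imset // cardsX cardsT hK in c1.
have cI : (q <= #|I|)%N.
  rewrite leqNgt; apply/negP => lt.
  have := leq_trans c1 (leq_mul (leqnn #|I|) card_ker).
  case: m hm => // m' _ /=; rewrite expnS leqNgt ltn_pmul2r ?lt //.
  by rewrite expn_gt0 (ltnW hq2).
have IS : I \subset subFq K q by apply/subsetP => _ /imsetP[x _ ->]; exact: tr_in.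
have /eqP eIS : I == subFq K q by rewrite eqEcard IS (leq_trans card_S cI).
by move: hy; rewrite -eIS => /imsetP[x _ ->]; exists x.
Qed.

Lemma lin_S (a : 'I_m -> K) y : (forall i, a i \in subFq K q) ->
  y \in subFq K q -> (linpoly q a).[y] \in subFq K q.
Proof.
move=> ha hy; rewrite lin_eval.
apply: (big_ind (fun z => z \in subFq K q)) => //; first exact: S_0.
  exact: S_add.
by move=> i _; apply: S_mul => //; exact: S_exp.
Qed.

End Aux.

Theorem corollary2p1 (K : finFieldType) (q m : nat)
  (hq : exists p k : nat, [/\ prime p, (0 < k)%N & q = (p ^ k)%N])
  (hm : (1 < m)%N) (hK : #|K| = (q ^ m)%N)
  (a1 a2 : 'I_m -> K)
  (ha1 : forall i, a1 i \in subFq K q) (ha2 : forall i, a2 i \in subFq K q)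
  (h : {poly K}) (hh : forall i, h`_i \in subFq K q)
  (gamma : K) :
  let L1 := linpoly q a1 in
  let L2 := linpoly q a2 in
  is_perm_poly (L1 + (L2 + gamma%:P) * (h \Po trpoly K q m))
  <->
  (is_perm_poly_on (subFq K q) (L1 + (L2 + (tr q m gamma)%:P) * h)
   /\ forall y, y \in subFq K q ->
        forall x : K, (L1.[x] + L2.[x] * h.[y] = 0 /\ tr q m x = 0) <-> x = 0).
Proof.
move=> L1 L2.
case: hq => p [k [pp k0 eq]].
have pch : p \in [pchar K].
  by apply: (@card_finPcharP _ p (k * m)) => //; rewrite hK eq expnM.
have hF n (x y : K) : (x + y) ^+ (q ^ n) = x ^+ (q ^ n) + y ^+ (q ^ n).
  apply: exprDn_pchar; rewrite eq -expnM (eq_pnat _ (pcharf_eq pch)) pnatX.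
  by rewrite pnat_id.
have hq2 : (1 < q)%N.
  rewrite eq; apply: leq_trans (prime_gt1 pp) _.
  by rewrite -{1}(expn1 p) leq_pexp2l // prime_gt0.
have hm0 : (0 < m)%N by apply: ltnW.
pose P := L1 + (L2 + gamma%:P) * (h \Po trpoly K q m).
pose G := L1 + (L2 + (tr q m gamma)%:P) * h.
have Fev x : P.[x] = L1.[x] + (L2.[x] + gamma) * h.[tr q m x].
  by rewrite /P hornerD hornerM hornerD hornerC horner_comp trpoly_eval.
have Gev y : G.[y] = L1.[y] + (L2.[y] + tr q m gamma) * h.[y].
  by rewrite /G hornerD hornerM hornerD hornerC.
have hT x : tr q m x \in subFq K q by exact: tr_in.
have key x : tr q m (P.[x]) = G.[tr q m x].
  rewrite Fev Gev [(_ + gamma) * _]mulrC trD // trZ //; last exact: S_horner.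
  by rewrite trD // !lin_tr // /L1 /L2 [h.[_] * _]mulrC.
rewrite -/P -/G /is_perm_poly /is_perm_poly_on.
split.
- case=> Finv hc1 hc2.
  have Pinj : injective (fun x => P.[x]) by exact: can_inj hc1.
  split; first split.
  + move=> y hy; rewrite Gev.
    have s1 : L1.[y] \in subFq K q by apply: lin_S.
    have s2 : L2.[y] \in subFq K q by apply: lin_S.
    have s3 : h.[y] \in subFq K q by apply: S_horner.
    have s4 := hT gamma.
    by apply: S_add => //; apply: S_mul => //; apply: S_add.
  + apply/imset_injP; apply/eqP/anti_leq; rewrite leq_imset_card /=.
    apply: subset_leq_card; apply/subsetP => y hy.
    have [z hz] := @tr_surj K q m hF hq2 hm0 hK _ hy.
    apply/imsetP; exists (tr q m (Finv z)); first exact: hT.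
    by rewrite -key hc2.
  + move=> y hy x; split; last first.
      by move=> ->; rewrite !lin0 // mul0r addr0 tr0.
    case=> e1 e2.
    have [x0 hx0] := @tr_surj K q m hF hq2 hm0 hK _ hy.
    have E : P.[x0 + x] = P.[x0 + 0].
      rewrite !Fev addr0 trD // e2 addr0 hx0 !linD //.
      have -> : L1.[x0] + L1.[x] + (L2.[x0] + L2.[x] + gamma) * h.[y] =
        L1.[x0] + (L2.[x0] + gamma) * h.[y] + (L1.[x] + L2.[x] * h.[y]) by ring.
      by rewrite e1 addr0.
    exact: addrI (Pinj _ _ E).
- case=> [[GS Ginj] H2].
  apply: injF_bij => x1 x2 e.
  have eT : tr q m x1 = tr q m x2 by apply: Ginj; rewrite ?hT // -!key e.
  apply: subr0_eq; apply: (proj1 (H2 (tr q m x2) (hT x2) (x1 - x2))); split.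
    rewrite !linB //.
    have -> : L1.[x1] - L1.[x2] + (L2.[x1] - L2.[x2]) * h.[tr q m x2] =
      (L1.[x1] + (L2.[x1] + gamma) * h.[tr q m x2]) -
      (L1.[x2] + (L2.[x2] + gamma) * h.[tr q m x2]) by ring.
    by move: e => /=; rewrite !Fev -eT => ->; rewrite subrr.
  by rewrite trB // eT subrr.
Qed.
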